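(* Let $a,b\ge 0$ and $t\ge 1$ be integers and let $A_1,\dots,A_n,B_1,\dots,B_n$ be subsets of a universe such that $|A_i|\le a$, $|B_i|\le b$ and $A_i\cap B_i=\emptyset$ for every $i\in [n]$, and $B_i\neq B_j$ for all distinct $i,j\in [n]$. If $n> b!\,(t(1+2a)-1)^b$, then there is a subset $I\subseteq [n]$ of size $t$ such that $A_i\cap B_j=\emptyset$ for all $i,j\in I$. *)

(* Defs.v *)
From mathcomp Require Import all_boot all_order.
From mathcomp Require Export finmap.

(* Main.v *)
Require Import Defs.
From mathcomp Require Import all_boot all_order finmap zify.
From Stdlib Require Classical_Prop.
Open Scope fset_scope.
Lemma card_sum (I: finType) (S: {set I}) (P: pred I) :
  #|[set j in S | P j]| = \sum_(j in S) P j.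
Proof.
rewrite -sum1_card big_mkcond /= [RHS]big_mkcond /=.
by apply: eq_bigr => j _; rewrite inE; case: (j \in S); case: (P j).
Qed.

Lemma greedy (I : finType) (R : rel I) (d : nat) (S : {set I}) :
  (forall S' : {set I}, S' \subset S -> S' != set0 -> exists2 v, v \in S' &
      #|[set j in S' | (j != v) && (R v j || R j v)]| <= d) ->
  forall m, m * d.+1 < #|S| -> exists J : {set I},
   [/\ J \subset S, #|J| = m.+1 & forall i j, i \in J -> j \in J -> i != j -> ~~ R i j].
Proof.
move=> HS m; elim: m S HS => [|m IH] S HS Hm.
  have: S != set0 by rewrite -card_gt0.
  case/set0Pn => v vS; exists [set v]; split; first by rewrite sub1set.
    by rewrite cards1.
  by move=> i j /set1P-> /set1P->; rewrite eqxx.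
have Sn0 : S != set0 by rewrite -card_gt0; lia.
have [v vS Hv] := HS S (subxx S) Sn0.
set N := [set j in S | (j != v) && (R v j || R j v)] in Hv.
set S2 := S :\: (v |: N).
have S2S : S2 \subset S by apply: subsetDl.
have cS2 : m * d.+1 < #|S2|.
  have h1 : #|S| <= #|S2| + #|v |: N|.
    apply: leq_trans (leq_card_setU _ _).
    apply: subset_leq_card; apply/subsetP => x xS.
    by rewrite in_setU in_setD xS andbT; case: (x \in v |: N).
  have h2 : #|v |: N| <= 1 + #|N| by rewrite cardsU1; case: (v \notin N).
  lia.
have HS2 : forall S' : {set I}, S' \subset S2 -> S' != set0 -> exists2 v, v \in S' &
      #|[set j in S' | (j != v) && (R v j || R j v)]| <= d.
  by move=> S' sub; apply: HS; apply: subset_trans sub S2S.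
have [J [JS2 cJ HJ]] := IH S2 HS2 cS2.
have vJ : v \notin J.
  apply/negP => /(subsetP JS2); by rewrite !inE eqxx.
exists (v |: J); split.
- apply/subsetP => x /setU1P [->|xJ] //; exact: (subsetP S2S _ (subsetP JS2 _ xJ)).
- by rewrite cardsU1 vJ cJ.
- have key : forall j, j \in J -> j != v -> ~~ (R v j || R j v).
    move=> j jJ jv; move: (subsetP JS2 _ jJ); rewrite !inE jv /=.
    by case/andP=> /norP [_ /negP hN] jS; apply/negP => hR; apply: hN; rewrite jS hR.
  move=> i j /setU1P [->|iJ] /setU1P [->|jJ]; rewrite ?eqxx //.
  + by rewrite eq_sym => jv; case/norP: (key j jJ jv).
  + by move=> iv; case/norP: (key i iJ iv).
  + by move=> ij; apply: HJ.
Qed.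

Lemma count_le (T : choiceType) (I : finType) (S : {set I}) (F : I -> {fset T}) (C : {fset T}) :
  #|[set j in S | C `&` F j != fset0]| <= \sum_(x <- C) #|[set j in S | x \in F j]|.
Proof.
rewrite (@card_sum _ S (fun j => C `&` F j != fset0)).
have -> : \sum_(x <- C) #|[set j in S | x \in F j]| = \sum_(x <- C) \sum_(j in S) (x \in F j) by apply: eq_bigr => x _; rewrite (@card_sum _ S (fun j => x \in F j)).
rewrite (exchange_big _ C (index_enum I)) /=.
rewrite [X in _ <= X]big_mkcond /= [X in X <= _]big_mkcond /=.
apply: leq_sum => j _; case: (j \in S) => //.
case: (boolP (C `&` F j != fset0)) => //= hne.
case/fset0Pn: hne => y; rewrite inE => /andP [yC yF].
rewrite lt0n sum_nat_seq_neq0; apply/hasP; exists y => //=.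
by rewrite yF.
Qed.

Lemma digraph (T : choiceType) (I : finType) (a t : nat) (ht : 1 <= t) (A B : I -> {fset T}) (hA : forall i, #|` A i| <= a) (D : {set I}) :
 (forall i j, i \in D -> j \in D -> i != j -> B i `&` B j = fset0) ->
 (forall i, i \in D -> A i `&` B i = fset0) ->
 t * (1 + 2 * a) <= #|D| ->
 exists J : {set I}, [/\ J \subset D, #|J| = t & forall i j, i \in J -> j \in J -> A i `&` B j = fset0].
Proof.
move=> hdisj hAB hD.
pose R := fun i j => A i `&` B j != fset0.
have out : forall S' : {set I}, S' \subset D -> forall i, #|[set j in S' | R i j]| <= a.
  move=> S' sub i; apply: leq_trans (@count_le _ _ S' B (A i)) _.
  apply: leq_trans (hA i); rewrite card_fset_sum1; apply: leq_sum => x _.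
  rewrite leqNgt; apply/negP => /card_gt1P [j1 [j2 [h1 h2 h12]]].
  move: h1 h2; rewrite !inE => /andP [j1S xj1] /andP [j2S xj2].
  have := hdisj j1 j2 (subsetP sub _ j1S) (subsetP sub _ j2S) h12.
  move/fsetP/(_ x); by rewrite !inE xj1 xj2.
have Hc : forall S' : {set I}, S' \subset D -> S' != set0 -> exists2 v, v \in S' & #|[set j in S' | (j != v) && (R v j || R j v)]| <= (2 * a).
  move=> S' sub ne.
  have sumin : \sum_(v in S') #|[set i in S' | R i v]| <= a * #|S'|.
    have -> : \sum_(v in S') #|[set i in S' | R i v]| = \sum_(i in S') #|[set j in S' | R i j]|.
      under eq_bigr => v _ do rewrite (@card_sum _ S' (fun i => R i v)).
      rewrite exchange_big /=. apply: eq_bigr => i _; by rewrite (@card_sum _ S' (fun j => R i j)).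
    rewrite -sum1_card big_distrr /=; apply: leq_sum => i _; rewrite muln1; exact: out.
  have [v vS' hv] : exists2 v, v \in S' & #|[set i in S' | R i v]| <= a.
    case: (boolP [exists v in S', #|[set i in S' | R i v]| <= a]).
      by case/exists_inP => v ? ?; exists v.
    move/exists_inPn => hall. exfalso.
    have : (a.+1) * #|S'| <= \sum_(v in S') #|[set i in S' | R i v]|.
      rewrite -sum1_card big_distrr /=; apply: leq_sum => v vS; rewrite muln1 ltnNge; exact: hall.
    have : 0 < #|S'| by rewrite card_gt0.
    nia.
  exists v => //.
  apply: (@leq_trans #|[set j in S' | R v j] :|: [set i in S' | R i v]|).
    apply: subset_leq_card; apply/subsetP => j; rewrite !inE => /andP [jS /andP [_ /orP [h|h]]]; by rewrite jS h ?orbT.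
  apply: leq_trans (leq_card_setU _ _) _. have := out S' sub v. lia.
have Hm : t.-1 * (2 * a).+1 < #|D|.
  case: t ht hD => // t' _ hD /=. nia.
have [J [JD cJ HJ]] := @greedy I R (2 * a) D Hc t.-1 Hm.
exists J; split => //. by rewrite cJ prednK.
move=> i j iJ jJ; case: (eqVneq i j) => [->|ij]; first exact: hAB (subsetP JD _ jJ).
by have := HJ i j iJ jJ ij; rewrite /R negbK => /eqP.
Qed.

Lemma aux (T : choiceType) (I : finType) (a t : nat) (ht : 1 <= t) (A : I -> {fset T}) (hA : forall i, #|` A i| <= a) (b : nat) :
 forall (S : {set I}) (B : I -> {fset T}),
 (forall i, i \in S -> #|` B i| <= b) ->
 (forall i j, i \in S -> j \in S -> B i = B j -> i = j) ->
 (forall i, i \in S -> A i `&` B i = fset0) ->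
 b`! * (t * (1 + 2 * a) - 1) ^ b < #|S| ->
 exists J : {set I}, [/\ J \subset S, #|J| = t & forall i j, i \in J -> j \in J -> A i `&` B j = fset0].
Proof.
set k := t * (1 + 2 * a) - 1.
have hk : k.+1 = t * (1 + 2 * a) by rewrite /k; nia.
elim: b => [|b IH] S B hB hinj hAB hn.
  rewrite fact0 expn0 mul1n in hn.
  case/card_gt1P: hn => i [j [iS jS ij]].
  have e : forall l, l \in S -> B l = fset0.
    by move=> l lS; apply: cardfs0_eq; have := hB l lS; lia.
  by move: ij; rewrite (hinj i j iS jS) ?eqxx // (e i iS) (e j jS).
set c := b`! * k ^ b.
have hn' : b.+1 * c * k < #|S|.
  have -> : b.+1 * c * k = b.+1`! * k ^ b.+1 by rewrite /c factS expnS; nia.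
  exact: hn.
case: (Classical_Prop.classic (exists x, c < #|[set i in S | x \in B i]|)) => [[x hx]|hno].
  set Sx := [set i in S | x \in B i] in hx.
  have SxS : Sx \subset S by apply/subsetP => i; rewrite inE => /andP [].
  have h1 : forall i, i \in Sx -> #|` B i `\ x| <= b.
    move=> i; rewrite inE => /andP [iS xBi] /=. have := hB i iS; rewrite (cardfsD1 x) xBi. lia.
  have h2 : forall i j, i \in Sx -> j \in Sx -> B i `\ x = B j `\ x -> i = j.
    move=> i j; rewrite !inE => /andP [iS xi] /andP [jS xj] /= e. apply: hinj => //.
    by rewrite -(fsetD1K xi) -(fsetD1K xj) e.
  have h3 : forall i, i \in Sx -> A i `&` (B i `\ x) = fset0.
    move=> i; rewrite inE => /andP [iS _] /=; apply/fsetP => y.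
    have := hAB i iS => /fsetP/(_ y); rewrite !inE.
    by case: (y \in A i) => //=; case: (y \in B i) => //=; rewrite andbF.
  have [J [JSx cJ HJ]] := IH Sx (fun i => B i `\ x) h1 h2 h3 hx.
  exists J; split => //; first exact: subset_trans JSx SxS.
  move=> i j iJ jJ; apply/fsetP => y; rewrite !inE.
  have := HJ i j iJ jJ => /fsetP/(_ y); rewrite !inE.
  case: (eqVneq y x) => [->|yx] /= h.
    have := subsetP JSx _ iJ; rewrite inE => /andP [iS xBi].
    have := hAB i iS => /fsetP/(_ x); rewrite !inE xBi andbT => ->.
    done.
  done.
have hc : forall x, #|[set i in S | x \in B i]| <= c.
  by move=> x; rewrite leqNgt; apply/negP => h; apply: hno; exists x.
pose R := fun i j => B i `&` B j != fset0.
have Hc : forall S' : {set I}, S' \subset S -> S' != set0 -> exists2 v, v \in S' &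
    #|[set j in S' | (j != v) && (R v j || R j v)]| <= (b.+1 * c).-1.
  move=> S' sub /set0Pn [v vS']; exists v => //.
  case: (eqVneq (B v) fset0) => [e|ne].
    rewrite (_ : [set _ in _ | _] = set0) ?cards0 //; apply/setP => j.
    by rewrite !inE /R e fset0I fsetI0 eqxx /= !andbF.
  set X := [set j in S | B v `&` B j != fset0].
  have vX : v \in X by rewrite inE (subsetP sub _ vS') fsetIid ne.
  have cX : #|X| <= b.+1 * c.
    apply: leq_trans (@count_le _ _ S B (B v)) _.
    apply: (@leq_trans (\sum_(x <- B v) c)); first by apply: leq_sum => x _; exact: hc.
    have -> : \sum_(x <- B v) c = #|` B v| * c.
      by rewrite card_fset_sum1 big_distrl /=; apply: eq_bigr => *; rewrite mul1n.
    by rewrite leq_mul2r hB ?orbT // (subsetP sub _ vS').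
  apply: (@leq_trans #|X :\ v|).
    apply: subset_leq_card; apply/subsetP => j; rewrite !inE => /andP [jS /andP [jv hR]].
    rewrite jv (subsetP sub _ jS) /=; case/orP: hR; rewrite /R // fsetIC //.
  have := cardsD1 v X; rewrite vX. lia.
have Hm : k * (b.+1 * c).-1.+1 < #|S|.
  case: (posnP c) => [c0|cpos].
    have k0 : k = 0.
      move: c0; rewrite /c => /eqP; rewrite muln_eq0 => /orP [].
        by rewrite eqn0Ngt fact_gt0.
      by rewrite expn_eq0 => /andP [/eqP].
    rewrite k0 mul0n. lia.
  rewrite prednK; [nia | by rewrite muln_gt0 cpos].
have [D [DS cD HD]] := @greedy I R (b.+1 * c).-1 S Hc k Hm.
have hdisj : forall i j, i \in D -> j \in D -> i != j -> B i `&` B j = fset0.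
  by move=> i j iD jD ij; apply/eqP; have := HD i j iD jD ij; rewrite /R negbK.
have hD : t * (1 + 2 * a) <= #|D| by rewrite cD hk.
have [J [JD cJ HJ]] := @digraph T I a t ht A B hA D hdisj (fun i iD => hAB i (subsetP DS _ iD)) hD.
exists J; split => //; exact: subset_trans JD DS.
Qed.

Theorem lemma4p5 (T : choiceType) (a b t n : nat) (ht : 1 <= t)
  (A B : 'I_n -> {fset T})
  (hA : forall i, #|` A i| <= a)
  (hB : forall i, #|` B i| <= b)
  (hAB : forall i, A i `&` B i = fset0)
  (hBinj : forall i j, i != j -> B i != B j)
  (hn : b`! * (t * (1 + 2 * a) - 1) ^ b < n) :
  exists I : {set 'I_n}, #|I| = t /\
    forall i j, i \in I -> j \in I -> A i `&` B j = fset0.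
Proof.
have hinj : forall i j, i \in [set: 'I_n] -> j \in [set: 'I_n] -> B i = B j -> i = j.
  move=> i j _ _ e; case: (eqVneq i j) => // ij; have := hBinj i j ij; by rewrite e eqxx.
have hn2 : b`! * (t * (1 + 2 * a) - 1) ^ b < #|[set: 'I_n]| by rewrite cardsT card_ord.
have [J [_ cJ HJ]] := @aux T 'I_n a t ht A hA b setT B (fun i _ => hB i) hinj (fun i _ => hAB i) hn2.
by exists J.
Qed.
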